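(* Let $G$ be a $(d+1)$-colourful graph on $[1..n]$ and let $\mathcal{I}\subseteq[1..d+1]$ with $|\mathcal{I}|=3$ be such that $|X(G_\mathcal{I})|$ is a disjoint union of $2$-spheres. Then there exist distinct $i,j\in\mathcal{I}$ such that $$\kappa_{i,j}-\kappa_\mathcal{I}\leq \frac{n}{6}.$$
   Context: A $(d+1)$-colourful graph of (even) order $n$ is a bipartite $(d+1)$-regular multigraph on $[1..n]$ whose edges are coloured with colours in $[1..d+1]$ so that each vertex is incident to exactly one edge of each colour. For $\mathcal{J}\subseteq[1..d+1]$, $G_\mathcal{J}$ is the graph on $[1..n]$ keeping only the edges with colours in $\mathcal{J}$, and $\kappa_\mathcal{J}$ is its number of connected components; $\kappa_{i,j}=\kappa_{\{i,j\}}$. For $|\mathcal{I}|=3$, $X(G_\mathcal{I})$ is the $2$-dimensional complex obtained by taking a triangle with vertices coloured by the three colours of $\mathcal{I}$ for each vertex of $G$, and for each edge $\{u,v\}$ of $G_\mathcal{I}$ of colour $i$ gluing the sides of the triangles of $u$ and $v$ whose endpoints are coloured $\mathcal{I}\setminus\{i\}$ by the colour-preserving isometry. *)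

(* Defs.v *)
From HB Require Import structures.
From mathcomp Require Import all_boot all_order all_algebra.
From mathcomp Require Import all_classical all_reals topology.
Set Implicit Arguments. Unset Strict Implicit. Unset Printing Implicit Defensive.
Import Order.TTheory GRing.Theory Num.Theory numFieldTopology.Exports.
Local Open Scope classical_set_scope.
Local Open Scope ring_scope.

(* Coloured graphs.  Vertices [1..n] are 'I_n, colours [1..d+1] are         *)
(* 'I_(d+1).  Since every vertex is incident to exactly one edge of each    *)
(* colour, the edges of colour c form a perfect matching, encoded by the    *)
(* involution  sigma c : 'I_n -> 'I_n  (sigma c v = other endpoint of the   *)
(* c-coloured edge at v).                                                   *)

Definition colourful (d n : nat) (sigma : 'I_d.+1 -> 'I_n -> 'I_n) : Prop :=
  (forall c : 'I_d.+1, involutive (sigma c)) /\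
  (* bipartite: every edge joins the two sides (so no loops) *)
  exists side : 'I_n -> bool, forall (c : 'I_d.+1) (v : 'I_n),
      side (sigma c v) != side v.

Definition adjJ (d n : nat) (sigma : 'I_d.+1 -> 'I_n -> 'I_n)
  (J : {set 'I_d.+1}) : rel 'I_n :=
  fun u v => [exists c in J, (sigma c u == v) || (sigma c v == u)].

Definition kappa (d n : nat) (sigma : 'I_d.+1 -> 'I_n -> 'I_n)
  (J : {set 'I_d.+1}) : nat :=
  n_comp (adjJ sigma J) [pred v : 'I_n | true].

(* The complex X(G_I).  A point of the triangle with vertices coloured by   *)
(* the colours of I is given by its barycentric coordinates                 *)
(* p : 'rV[R]_(d+1), with p 0 c >= 0, p 0 c = 0 for c \notin I, and the     *)
(* coordinates summing to 1.  The side of the triangle whose endpoints are  *)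
(* coloured I \ {i} is { p | p 0 i = 0 }, and the colour-preserving         *)
(* isometry between two such sides is the identity in barycentric           *)
(* coordinates.                                                             *)

Definition triangle (R : realType) (d : nat) (I : {set 'I_d.+1})
  : set 'rV[R]_d.+1 :=
  [set p | (forall c, 0 <= p ord0 c) /\ (forall c, c \notin I -> p ord0 c = 0)
           /\ \sum_c p ord0 c = 1].

Definition tri_union (R : realType) (d n : nat) (I : {set 'I_d.+1})
  : set (discrete_topology 'I_n * 'rV[R]_d.+1)%type :=
  [set x | @triangle R d I x.2].

Notation trisp R n I := (set_type (@tri_union R _ n I)).

Definition zeroI (R : realType) (d : nat) (I : {set 'I_d.+1})
  (p : 'rV[R]_d.+1) : {set 'I_d.+1} :=
  [set c in I | p ord0 c == 0].

(* The equivalence relation generated by the gluings: (u,p) ~ (v,q) iff   *)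
(* p = q and u, v are joined by a path of G using only colours i in I     *)
(* with p_i = 0 (i.e. edges along whose glued side the point p lies).     *)
Definition glue_rel (R : realType) (d n : nat) (sigma : 'I_d.+1 -> 'I_n -> 'I_n)
  (I : {set 'I_d.+1}) : rel (trisp R n I) :=
  fun x y =>
    ((sval x).2 == (sval y).2) &&
    connect (adjJ sigma (@zeroI R d I (sval x).2))
            ((sval x).1 : 'I_n) ((sval y).1 : 'I_n).

Lemma adjJ_sym d n sigma J : symmetric (@adjJ d n sigma J).
Proof.
move=> u v; apply/existsP/existsP => -[c /andP [cJ h]]; exists c;
  by rewrite cJ /= orbC.
Qed.

Lemma glue_rel_refl R d n sigma I : reflexive (@glue_rel R d n sigma I).
Proof. by move=> x; rewrite /glue_rel eqxx connect0. Qed.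

Lemma glue_rel_sym R d n sigma I : symmetric (@glue_rel R d n sigma I).
Proof.
move=> x y; rewrite /glue_rel eq_sym.
case: eqP => //= ->; by rewrite (sym_connect_sym (@adjJ_sym _ _ sigma _)).
Qed.

Lemma glue_rel_trans R d n sigma I : transitive (@glue_rel R d n sigma I).
Proof.
move=> y x z /andP [/eqP exy cxy] /andP [/eqP eyz cyz].
rewrite exy in cxy; rewrite /glue_rel exy eyz eqxx /=.
by rewrite -eyz; exact: connect_trans cxy cyz.
Qed.

Canonical glue_equiv (R : realType) (d n : nat)
  (sigma : 'I_d.+1 -> 'I_n -> 'I_n) (I : {set 'I_d.+1}) :=
  EquivRel (@glue_rel R d n sigma I) (@glue_rel_refl R d n sigma I)
    (@glue_rel_sym R d n sigma I) (@glue_rel_trans R d n sigma I).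

Local Open Scope quotient_scope.

Definition XG (R : realType) (d n : nat) (sigma : 'I_d.+1 -> 'I_n -> 'I_n)
  (I : {set 'I_d.+1}) : topologicalType :=
  quotient_topology {eq_quot (@glue_rel R d n sigma I)}.

(* Model of a disjoint union of k 2-spheres: k disjoint unit spheres in R^3 *)
Definition spheres (R : realType) (k : nat) : set 'rV[R]_3 :=
  [set x | exists2 j : nat, (j < k)%N &
     (x ord0 0 - 3 * j%:R) ^+ 2 + x ord0 1 ^+ 2 + x ord0 2 ^+ 2 = 1].

Definition homeomorphic (X Y : topologicalType) : Prop :=
  exists (f : X -> Y) (g : Y -> X),
    [/\ continuous f, continuous g, cancel f g & cancel g f].

Definition union_of_2spheres (R : realType) (X : topologicalType) : Prop :=
  exists k : nat, homeomorphic X (set_type (@spheres R k) : topologicalType).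

(* Main.v *)
Require Import Defs.
From HB Require Import structures.
From mathcomp Require Import all_boot all_order all_algebra.
From mathcomp Require Import all_classical all_reals topology.
From mathcomp Require Import all_fingroup zify lra.
Import Order.TTheory GRing.Theory Num.Theory numFieldTopology.Exports.
Set Implicit Arguments. Unset Strict Implicit. Unset Printing Implicit Defensive.


Section Counting.
Variable T : finType.

Definition rep {U : eqType} (f : T -> U) x := odflt x [pick y | f y == f x].

Lemma repE (U : eqType) (f : T -> U) x : f (rep f x) = f x.
Proof. by rewrite /rep; case: pickP => [y /eqP //|/(_ x)]; rewrite eqxx. Qed.

Lemma rep_eq (U : eqType) (f : T -> U) x y : f x = f y -> rep f x = rep f y.
Proof.
move=> Hxy; rewrite /rep Hxy; case: pickP => //= /(_ y); by rewrite eqxx.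
Qed.

Lemma card_rep (U : finType) (f : T -> U) : #|rep f @: T| = #|f @: T|.
Proof.
have -> : f @: T = f @: (rep f @: T).
  by rewrite -imset_comp; apply: eq_imset => x /=; rewrite repE.
apply/esym/card_in_imset => _ _ /imsetP[x _ ->] /imsetP[y _ ->].
by rewrite !repE; apply: rep_eq.
Qed.

Definition refines (U V : eqType) (f : T -> U) (g : T -> V) :=
  forall x y, f x = f y -> g x = g y.

Lemma card_refine (U V : finType) (f : T -> U) (g : T -> V) :
  refines f g -> #|g @: T| <= #|f @: T|.
Proof.
move=> H; have -> : g @: T = g @: (rep f @: T).
  by rewrite -imset_comp; apply: eq_imset => x /=; apply: H; rewrite repE.
by rewrite -(card_rep f) leq_imset_card.
Qed.

Lemma card_fibre2 (U V : finType) (f : T -> U) (g : T -> V) (h : T -> T) :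
  refines f g -> (forall x z, g z = g x -> f z = f x \/ f z = f (h x)) ->
  #|f @: T| <= 2 * #|g @: T|.
Proof.
move=> Hr H; pose r := rep g.
have sub : f @: T \subset (f \o r) @: T :|: (f \o h \o r) @: T.
  apply/fintype.subsetP => _ /imsetP[z _ ->]; rewrite inE.
  have [->|->] := H (r z) z (esym (repE g z)).
    by rewrite imset_f.
  by rewrite orbC imset_f.
apply: (leq_trans (subset_leq_card sub)); apply: (leq_trans (leq_card_setU _ _)).
rewrite mul2n -addnn -(card_rep g); apply: leq_add.
  by rewrite imset_comp leq_imset_card.
by rewrite imset_comp leq_imset_card.
Qed.

Lemma card_fibre2' (U V : finType) (f : T -> U) (g : T -> V) (h : T -> T) :
  refines f g -> (forall x, g (h x) = g x /\ f (h x) <> f x) ->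
  2 * #|g @: T| <= #|f @: T|.
Proof.
move=> Hr H; pose r := rep g.
have rinj x y : g x = g y -> r x = r y by apply: rep_eq.
set A := (f \o r) @: T; set B := (f \o h \o r) @: T.
have cA : #|A| = #|g @: T|.
  rewrite /A imset_comp -(card_rep g); apply: card_in_imset.
  move=> _ _ /imsetP[x _ ->] /imsetP[y _ ->] /Hr; rewrite !repE => /rinj.
  by rewrite /r => ->.
have cB : #|B| = #|g @: T|.
  rewrite /B (imset_comp (f \o h) r) -(card_rep g); apply: card_in_imset.
  move=> _ _ /imsetP[x _ ->] /imsetP[y _ ->] /= /Hr.
  rewrite (proj1 (H _)) (proj1 (H (r y))) !repE => /rinj.
  by rewrite /r => ->.
have dAB : A :&: B = finset.set0.
  apply/setP => u; rewrite !inE; apply/negP => /andP[/imsetP[x _ ->]].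
  case/imsetP => y _ /= E; have := E => /Hr; rewrite (proj1 (H _)) !repE.
  move=> /rinj Exy; move: E; rewrite Exy => E.
  by case: (H (r y)) => _ /(_ (esym E)).
have := cardsUI A B; rewrite dAB cards0 addn0 cA cB addnn -mul2n => <-.
apply: subset_leq_card; apply/fintype.subsetP => u; rewrite inE.
by case/orP => /imsetP[x _ ->] /=; rewrite imset_f.
Qed.

Lemma card_edge (U V : finType) (f : T -> U) (g : T -> V) (a b : T) :
  (forall x z, g x = g z -> f x = f z \/ f z \in [set f a; f b]) ->
  #|f @: T| <= #|g @: T| + 1.
Proof.
move=> H; pose r := rep g; set A := (f \o r) @: T; set S := [set f a; f b].
have sub : f @: T \subset A :|: S.
  apply/fintype.subsetP => _ /imsetP[z _ ->]; rewrite inE.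
  case: (H (r z) z (repE g z)) => [<-|->]; last by rewrite orbT.
  by rewrite imset_f.
have fra : f (r a) \in A :&: S.
  rewrite inE imset_f //=; case: (H a (r a) (esym (repE g a))) => // <-.
  by rewrite !inE eqxx.
have cA : #|A| <= #|g @: T|.
  by rewrite /A imset_comp -(card_rep g) leq_imset_card.
have cS : #|S| <= 2 by rewrite cards2; case: (_ != _).
have cI : 0 < #|A :&: S| by apply/card_gt0P; exists (f (r a)).
have := cardsUI A S; move: (subset_leq_card sub).
move: #|A :|: S| #|A :&: S| cA cS cI => u v; lia.
Qed.

End Counting.


Section PermLemma.
Variable T : finType.

Lemma connect_ind (e : rel T) (P : T -> Prop) x y :
  P x -> (forall u v, e u v -> P u -> P v) -> connect e x y -> P y.
Proof.
move=> Px He /connectP[p pth ->]; elim: p x Px pth => //= z p IHp x Px.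
by case/andP => exz pz; apply: IHp pz; apply: He Px.
Qed.

Definition Rst (s t : {perm T}) : rel T :=
  fun x y => [|| s x == y, t x == y, s y == x | t y == x].

Lemma Rst_sym (s t : {perm T}) : symmetric (Rst s t).
Proof.
move=> x y; rewrite /Rst.
by case: (s x == y); case: (t x == y); case: (s y == x); case: (t y == x).
Qed.

Lemma Rsym (s t : {perm T}) : connect_sym (Rst s t).
Proof. exact: sym_connect_sym (@Rst_sym s t). Qed.

Definition Oc (s t : {perm T}) := #|fingraph.root (Rst s t) @: T|.
Definition cc (s : {perm T}) := #|porbits s|.

Lemma porbits_mul_tperm_r (s : {perm T}) (x y : T) :
  #|porbits (s * tperm x y)%g| + (x \notin porbit s y).*2 = #|porbits s| + (x != y).
Proof.
rewrite -porbitsV invMg tpermV.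
have := porbits_mul_tperm (s^-1) x y.
by rewrite porbitsV porbitV.
Qed.

Lemma cc_le (s : {perm T}) : cc s <= #|T|.
Proof. exact: leq_imset_card. Qed.

Lemma cc1 : cc (1 : {perm T}) = #|T|.
Proof.
rewrite /cc /porbits card_imset // => x y E.
have : y \in porbit 1 x by rewrite E porbit_id.
by case/porbitP => i ->; rewrite expg1n perm1.
Qed.

Lemma base_case (s : {perm T}) : cc s <= Oc s 1.
Proof.
apply: card_refine => x y /(fingraph.rootP (@Rsym s 1)).
apply: (connect_ind (P := fun v => porbit s x = porbit s v)) => // u v.
have h w : porbit s (s w) = porbit s w.
  by apply/eqP; rewrite eq_porbit_mem; have := mem_porbit s 1 w; rewrite expg1.
by case/or4P => /eqP <- ->; rewrite ?perm1 ?h.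
Qed.

Lemma conn_pow (s t : {perm T}) x i : connect (Rst s t) x (((s * t) ^+ i)%g x).
Proof.
elim: i => [|i IH]; first by rewrite expg0 perm1.
rewrite expgSr permM; apply: (connect_trans IH); rewrite permM.
set y := ((s * t) ^+ i)%g x.
have e1 : Rst s t y (s y) by rewrite /Rst eqxx.
have e2 : Rst s t (s y) (t (s y)) by rewrite /Rst eqxx orbT.
exact: connect_trans (connect1 e1) (connect1 e2).
Qed.

Lemma O_step (s t' : {perm T}) a b :
  Oc s t' <= Oc s (t' * tperm a b)%g + (a \notin porbit (s * t')%g b).
Proof.
set t := (t' * tperm a b)%g; set R' := Rst s t'; set R := Rst s t.
have lift (E : rel T) : symmetric E -> (forall x y, R' x y -> E x y) ->
    connect E a b -> forall x y, R x y -> connect E x y.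
  move=> Esym HE Eab.
  have Eba : connect E b a by rewrite (sym_connect_sym Esym).
  have step u : connect E u (t u).
    rewrite /t permM; case: tpermP => [Hu|Hu|_ _].
    - apply: (connect_trans _ Eab); apply/connect1/HE; by rewrite /R' /Rst Hu eqxx orbT.
    - apply: (connect_trans _ Eba); apply/connect1/HE; by rewrite /R' /Rst Hu eqxx orbT.
    - by apply/connect1/HE; rewrite /R' /Rst eqxx orbT.
  move=> x y; case/or4P => /eqP <-.
  - by apply/connect1/HE; rewrite /R' /Rst eqxx.
  - exact: step.
  - by rewrite (sym_connect_sym Esym); apply/connect1/HE; rewrite /R' /Rst eqxx.
  - by rewrite (sym_connect_sym Esym); apply: step.
case: (boolP (a \in porbit (s * t') b)) => [Hab|_]; rewrite /= ?addn0.
  apply: card_refine => x y /(fingraph.rootP (@Rsym s t)) cxy; apply/(fingraph.rootP (@Rsym s t')).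
  apply: connect_sub cxy; apply: lift => //; first exact: Rst_sym.
  rewrite (Rsym s t'); case/porbitP: Hab => i ->; exact: conn_pow.
pose K : rel T := fun x y => R' x y || ((x == a) && (y == b)) || ((x == b) && (y == a)).
have Ksym : symmetric K.
  move=> x y; rewrite /K /R' (Rst_sym s t' x y).
  by case: (Rst s t' y x); case: (x == a); case: (y == b); case: (x == b); case: (y == a).
have KS : connect_sym K by exact: sym_connect_sym.
apply: (@leq_trans (#|fingraph.root K @: T| + 1)).
  apply: (card_edge (a := a) (b := b)) => x z /(fingraph.rootP KS) cxz.
  have : [\/ connect R' x z, connect R' a z | connect R' b z].
    move: cxz; apply: (connect_ind (P := fun z => [\/ connect R' x z, connect R' a z | connect R' b z])); first by apply: Or31.
    move=> u v /orP[/orP[Ruv|/andP[_ /eqP ->]]|/andP[_ /eqP ->]] Pu.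
    - case: Pu => h; [apply: Or31 | apply: Or32 | apply: Or33];
        exact: (connect_trans h (connect1 Ruv)).
    - exact: Or33.
    - exact: Or32.
  case => h; [left | right | right]; first exact/(fingraph.rootP (@Rsym s t')).
    by rewrite !inE (fingraph.rootP (@Rsym s t') h) eqxx.
  by rewrite !inE (fingraph.rootP (@Rsym s t') h) eqxx orbT.
rewrite leq_add2r; apply: card_refine => x y /(fingraph.rootP (@Rsym s t)) cxy.
apply/(fingraph.rootP KS); apply: connect_sub cxy; apply: lift => //.
  by move=> u v Ruv; rewrite /K Ruv.
by apply: connect1; rewrite /K !eqxx orbT.
Qed.

Lemma main_perm (s t : {perm T}) : cc s + cc t + cc (s * t)%g <= #|T| + 2 * Oc s t.
Proof.
have [k] := ubnP (#|T| - cc t); elim: k t => // k IH t Hk.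
case: (pickP (fun x => t x != x)) => [a Ha | Hn]; last first.
  have -> : t = (1%g : {perm T}) by apply/permP => x; rewrite perm1; move/negbFE/eqP: (Hn x).
  by rewrite mulg1 cc1; have := base_case s; lia.
set b := t a; set tt := tperm a b.
have ab : a != b by rewrite eq_sym.
have E1 := porbits_mul_tperm_r t a b.
have abt : a \in porbit t b.
  by rewrite porbit_sym /b; have := mem_porbit t 1 a; rewrite expg1.
rewrite abt ab /= addn0 -/tt in E1.
set t' := (t * tt)%g.
have Et : (t' * tt)%g = t by rewrite -mulgA tperm2 mulg1.
set r := (s * t')%g.
have Est : (s * t)%g = (r * tt)%g by rewrite /r -mulgA Et.
have E2 := porbits_mul_tperm_r r a b; rewrite ab -/tt in E2.
have ct := cc_le t'.
have Ho := O_step s t' a b.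
have IH' := IH t'.
rewrite Est; rewrite -/t' in E1.
move: E1 E2 Ho Hk ct IH'; rewrite /cc /Oc -/tt -/r Et.
move: (#|porbits t'|) (#|porbits t|) (#|porbits r|) (#|porbits (r * tt)%g|) => x1 x2 x3 x4.
move: (#|[set fingraph.root (Rst s t') x | x : T]|) (#|[set fingraph.root (Rst s t) x | x : T]|) => y1 y2.
by case: (a \in porbit r b) => /=; lia.
Qed.

End PermLemma.

Section Bridge.
Variables (d n : nat) (sigma : 'I_d.+1 -> 'I_n -> 'I_n).
Hypothesis inv : forall c, involutive (sigma c).
Variable side : 'I_n -> bool.
Hypothesis Hside : forall c v, side (sigma c v) != side v.

Definition sp c : {perm 'I_n} := perm (inv_inj (inv c)).
Lemma spE c x : sp c x = sigma c x. Proof. exact: permE. Qed.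

Lemma sideE c v : side (sigma c v) = ~~ side v.
Proof. by move: (Hside c v); case: (side (sigma c v)); case: (side v). Qed.

Lemma adj_sym (J : {set 'I_d.+1}) : connect_sym (adjJ sigma J).
Proof. exact: sym_connect_sym (@adjJ_sym _ _ sigma J). Qed.

Lemma adj_edge (J : {set 'I_d.+1}) c u : c \in J -> adjJ sigma J u (sigma c u).
Proof. by move=> cJ; apply/existsP; exists c; rewrite cJ eqxx. Qed.

Arguments adj_edge {J c u}.

Lemma adj_inv (J : {set 'I_d.+1}) u v : adjJ sigma J u v -> exists2 c, c \in J & v = sigma c u.
Proof.
case/existsP => c /andP[cJ /orP[/eqP <-|/eqP <-]]; exists c => //.
by rewrite inv.
Qed.

Lemma kappa_nc (J : {set 'I_d.+1}) : kappa sigma J = #|fingraph.root (adjJ sigma J) @: 'I_n|.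
Proof.
rewrite /kappa /n_comp_mem; apply: eq_card => x; rewrite !inE andbT.
apply/eqP/imsetP => [<-|[y _ ->]]; first by exists x.
exact: root_root (adj_sym J) y.
Qed.

Lemma pair_bound i j : i != j ->
  2 * kappa sigma [set i; j] <= cc (sp i * sp j)%g.
Proof.
move=> ij; rewrite kappa_nc /cc /porbits.
set s := (sp i * sp j)%g.
have sE x : s x = sigma j (sigma i x) by rewrite permM !spE.
have ei : i \in [set i; j] by rewrite !inE eqxx.
have ej : j \in [set i; j] by rewrite !inE eqxx orbT.
have conn x m : connect (adjJ sigma [set i; j]) x ((s ^+ m)%g x).
  elim: m => [|m IH]; first by rewrite expg0 perm1.
  rewrite expgSr permM sE; apply: (connect_trans IH).
  exact: connect_trans (connect1 (adj_edge ei)) (connect1 (adj_edge ej)).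
have sside x m : side ((s ^+ m)%g x) = side x.
  elim: m => [|m IH]; first by rewrite expg0 perm1.
  by rewrite expgSr permM sE !sideE negbK.
apply: (@card_fibre2' _ _ _ (porbit s) (fingraph.root (adjJ sigma [set i; j])) (sigma i)).
  move=> x y E; apply/(@fingraph.rootP _ (adjJ sigma [set i; j]) (adj_sym [set i; j])).
  have : y \in porbit s x by rewrite E porbit_id.
  by case/porbitP => m ->.
move=> x; split.
  apply/esym/(fingraph.rootP (adj_sym [set i; j])); exact: connect1 (adj_edge ei).
move=> E; have : sigma i x \in porbit s x by rewrite -E porbit_id.
case/porbitP => m /(congr1 side); rewrite sside sideE.
by case: (side x).
Qed.

Lemma orbit_bound (I : {set 'I_d.+1}) i j k :
  i \in I -> j \in I -> k \in I ->
  (forall c, c \in I -> [\/ c = i, c = j | c = k]) ->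
  Oc (sp i * sp j)%g (sp j * sp k)%g <= 2 * kappa sigma I.
Proof.
move=> iI jI kI cI; rewrite kappa_nc /Oc.
set s := (sp i * sp j)%g; set t := (sp j * sp k)%g.
set R := Rst s t.
have sE x : s x = sigma j (sigma i x) by rewrite permM !spE.
have tE x : t x = sigma k (sigma j x) by rewrite permM !spE.
have RA z : R z (sigma j (sigma i z)) by rewrite /R /Rst sE eqxx.
have RB z : R z (sigma k (sigma j z)) by rewrite /R /Rst tE eqxx orbT.
have RC z : R (sigma i z) (sigma j z) by rewrite /R /Rst sE inv eqxx.
have RD z : R (sigma j z) (sigma k z) by rewrite /R /Rst tE inv eqxx orbT.
have RE z : R (sigma j (sigma k z)) z by rewrite /R /Rst tE !inv eqxx orbT.
have RS := Rsym s t.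
have conjD u v : (s u == v) || (t u == v) ->
    connect R (sigma j u) (sigma j v).
  case/orP => /eqP <-.
    by rewrite sE inv RS; apply: connect1.
  by rewrite tE RS; apply: connect1; apply: RE.
have conjR u v : R u v -> connect R (sigma j u) (sigma j v).
  rewrite /R /Rst => /or4P[h|h|h|h].
  - by apply: conjD; rewrite h.
  - by apply: conjD; rewrite h orbT.
  - by rewrite RS; apply: conjD; rewrite h.
  - by rewrite RS; apply: conjD; rewrite h orbT.
have conjC u v : connect R u v -> connect R (sigma j u) (sigma j v).
  apply: (connect_ind (P := fun w => connect R (sigma j u) (sigma j w))) => //.
  move=> w1 w2 /conjR h1 h2; exact: connect_trans h2 h1.
apply: (@card_fibre2 _ _ _ (fingraph.root R) (fingraph.root (adjJ sigma I)) (sigma j)).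
  move=> x y /(fingraph.rootP RS) cxy; apply/(fingraph.rootP (adj_sym I)).
  apply: connect_sub cxy => u v; rewrite /R /Rst => /or4P[]/eqP <-.
  - rewrite sE; exact: connect_trans (connect1 (adj_edge iI)) (connect1 (adj_edge jI)).
  - rewrite tE; exact: connect_trans (connect1 (adj_edge jI)) (connect1 (adj_edge kI)).
  - rewrite adj_sym sE; exact: connect_trans (connect1 (adj_edge iI)) (connect1 (adj_edge jI)).
  - rewrite adj_sym tE; exact: connect_trans (connect1 (adj_edge jI)) (connect1 (adj_edge kI)).
move=> x z /esym /(fingraph.rootP (adj_sym I)) cxz.
have : connect R x z \/ connect R x (sigma j z).
  move: cxz; apply: (connect_ind (P := fun z => connect R x z \/ connect R x (sigma j z))).
    by left.
  move=> u w /adj_inv[c cI' ->]; case: (cI c cI') => -> [h|h].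
  - by right; apply: (connect_trans h); apply: connect1; apply: RA.
  - by left; apply: (connect_trans h); rewrite RS; apply: connect1; apply: RC.
  - by right; rewrite inv.
  - by left.
  - by right; apply: (connect_trans h); rewrite RS; apply: connect1; apply: RE.
  - by left; apply: (connect_trans h); apply: connect1; apply: RD.
case => h; [left | right]; apply/(fingraph.rootP RS); first by rewrite RS.
by have := conjC _ _ h; rewrite inv RS.
Qed.

End Bridge.

Local Open Scope ring_scope.

Theorem lemma1 (R : realType) (d n : nat) (sigma : 'I_d.+1 -> 'I_n -> 'I_n)
  (I : {set 'I_d.+1}) :
  colourful sigma -> #|I| = 3%N ->
  union_of_2spheres R (XG R sigma I) ->
  exists i j : 'I_d.+1, [/\ i \in I, j \in I, i != j &
    (kappa sigma [set i; j])%:R - (kappa sigma I)%:R <= (n%:R / 6 : rat)].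
Proof.
move=> [inv [side Hside]] H3 _.
have [i iI] : exists i, i \in I by apply/card_gt0P; rewrite H3.
have H2 : #|I :\ i| = 2%N by move: (cardsD1 i I); rewrite iI H3 => -[].
have [j jI'] : exists j, j \in I :\ i by apply/card_gt0P; rewrite H2.
have H1 : #|I :\ i :\ j| = 1%N by move: (cardsD1 j (I :\ i)); rewrite jI' H2 => -[].
have [k kI'] : exists k, k \in I :\ i :\ j by apply/card_gt0P; rewrite H1.
have H0 : #|I :\ i :\ j :\ k| = 0%N by move: (cardsD1 k (I :\ i :\ j)); rewrite kI' H1 => -[].
move: jI' kI'; rewrite !inE => /andP[ji jI] /andP[kj /andP[ki kI]].
have cI c : c \in I -> [\/ c = i, c = j | c = k].
  move=> cI; case: (eqVneq c i) => [->|ci]; first exact: Or31.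
  case: (eqVneq c j) => [->|cj]; first exact: Or32.
  case: (eqVneq c k) => [->|ck]; first exact: Or33.
  have hc : c \in I :\ i :\ j :\ k by rewrite !inE ci cj ck cI.
  have : (0 < #|I :\ i :\ j :\ k|)%N by apply/card_gt0P; exists c.
  by rewrite H0.
have ij : i != j by rewrite eq_sym.
have jk : j != k by rewrite eq_sym.
have ik : i != k by rewrite eq_sym.
have hij := pair_bound inv Hside ij.
have hjk := pair_bound inv Hside jk.
have hik := pair_bound inv Hside ik.
have hO := orbit_bound inv iI jI kI cI.
have hM := main_perm (sp inv i * sp inv j)%g (sp inv j * sp inv k)%g.
have Ess : ((sp inv i * sp inv j) * (sp inv j * sp inv k))%g = (sp inv i * sp inv k)%g.
  apply/permP => x; rewrite !permM !spE inv //.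
rewrite Ess card_ord in hM.
move: hij hjk hik hO hM.
set a := kappa sigma [set i; j]; set b := kappa sigma [set j; k].
set c := kappa sigma [set i; k]; set K := kappa sigma I.
move: (cc _) (cc _) (cc _) (Oc _ _) => x1 x2 x3 y hij hjk hik hO hM.
have key : (6 * a <= n + 6 * K \/ 6 * b <= n + 6 * K \/ 6 * c <= n + 6 * K)%N by lia.
have tor (u : nat) : (6 * u <= n + 6 * K)%N -> u%:R - K%:R <= (n%:R / 6 : rat).
  move=> h; have : ((6 * u)%:R <= (n + 6 * K)%:R :> rat) by rewrite ler_nat.
  rewrite natrD !natrM => h'; lra.
case: key => [h|[h|h]].
- by exists i, j; rewrite iI jI eq_sym ji; split => //; apply: tor.
- by exists j, k; rewrite jI kI eq_sym kj; split => //; apply: tor.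
- by exists i, k; rewrite iI kI eq_sym ki; split => //; apply: tor.
Qed.
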